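(* There exist an environment $E$ and a total preorder $\succeq$ on $\Pi^E$ such that $\succeq\in\mathrm{Ord}_{\mathrm{RM}}(E)$ but $\succeq\notin\mathrm{Ord}_{\mathrm{ONMR}}(E)$.
   Context: An environment is a tuple $E=(\mathcal S,\mathcal A,\mathcal T,\mathcal I)$ where $\mathcal S,\mathcal A$ are finite nonempty sets, $\mathcal T:\mathcal S\times\mathcal A\to\Delta(\mathcal S)$ and $\mathcal I\in\Delta(\mathcal S)$. A policy is a map $\pi:\mathcal S\to\Delta(\mathcal A)$ (stationary, possibly stochastic); $\Pi^E$ denotes the set of all policies. A trajectory $\xi=(s_0,a_0,s_1,a_1,\dots)$ is generated under $\pi$ by $s_0\sim\mathcal I$, $a_t\sim\pi(s_t)$, $s_{t+1}\sim\mathcal T(s_t,a_t)$; $\mathbb E^\pi_\xi$ denotes expectation under this distribution. An objective-specification formalism $X$ assigns to each environment $E$ a set of objective specifications, each inducing a total preorder $\succeq$ on $\Pi^E$; $\mathrm{Ord}_X(E)$ is the set of total preorders so induced. A specification defining a scalar $J:\Pi^E\to\mathbb R$ induces $\pi_1\succeq\pi_2\iff J(\pi_1)\ge J(\pi_2)$. RM (reward machines): specification $(U,u_0,\delta_U,\delta_{\mathcal R},\gamma)$ with $U$ a finite set, $u_0\in U$, $\delta_U:U\times\mathcal S\times\mathcal A\times\mathcal S\to U$, $\delta_{\mathcal R}:U\times U\to(\mathcal S\times\mathcal A\times\mathcal S\to\mathbb R)$, $\gamma\in[0,1)$; along a trajectory $u_{t+1}=\delta_U(u_t,s_t,a_t,s_{t+1})$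 and $J(\pi)=\mathbb E^\pi_\xi[\sum_{t=0}^\infty\gamma^t\,\delta_{\mathcal R}(u_t,u_{t+1})(s_t,a_t,s_{t+1})]$. ONMR: specification $(\mathcal R,f,\gamma)$ with $\mathcal R:\mathcal S\times\mathcal A\times\mathcal S\to\mathbb R$, $f:\mathbb R\to\mathbb R$, $\gamma\in[0,1)$; $J(\pi)=f\big(\mathbb E^\pi_\xi[\sum_{t=0}^\infty\gamma^t\mathcal R(s_t,a_t,s_{t+1})]\big)$. *)

(* Defs.v *)
From HB Require Import structures.
From mathcomp Require Import all_boot all_order all_algebra.
From mathcomp Require Import all_classical all_reals all_analysis.
From mathcomp Require Import Rstruct Rstruct_topology.

Set Implicit Arguments.
Unset Strict Implicit.
Unset Printing Implicit Defensive.
Import Order.TTheory GRing.Theory Num.Theory.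
Local Open Scope ring_scope.

Notation realR := Rdefinitions.R.

Definition is_dist (X : finType) (p : X -> realR) : Prop :=
  (forall x, 0 <= p x) /\ \sum_(x : X) p x = 1.

Record env := Env {
  St : finType;
  Act : finType;
  trans : St -> Act -> St -> realR;
  init : St -> realR;
  St_nonempty : (0 < #|St|)%N;
  Act_nonempty : (0 < #|Act|)%N;
  trans_dist : forall s a, is_dist (trans s a);
  init_dist : is_dist init }.

Definition policy (E : env) :=
  {pol : St E -> Act E -> realR | forall s, is_dist (pol s)}.

Definition pol_fun (E : env) (pol : policy E) : St E -> Act E -> realR :=
  proj1_sig pol.

Definition transition (E : env) : Type := (St E * Act E * St E)%type.

(* Sum over all continuations of n more transitions starting in state s,
   weighted by their probability under pol; h is the (reversed) history so far.
   f is applied to the full (chronological) list of transitions. *)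
Fixpoint pathsum (E : env) (pol : policy E) (n : nat) (s : St E)
    (h : seq (transition E)) (f : seq (transition E) -> realR) : realR :=
  match n with
  | 0 => f (rev h)
  | n'.+1 =>
      \sum_(a : Act E) \sum_(s' : St E)
        pol_fun pol s a * trans s a s' * pathsum pol n' s' ((s, a, s') :: h) f
  end.

Definition prefix_expect (E : env) (pol : policy E) (n : nat)
    (f : seq (transition E) -> realR) : realR :=
  \sum_(s0 : St E) init s0 * pathsum pol n s0 [::] f.

Definition series_sum (u : nat -> realR) : realR :=
  limn (fun n => \sum_(0 <= t < n) u t).

Record RMspec (E : env) := RMSpec {
  rmU : finType;
  rm_u0 : rmU;
  rm_dU : rmU -> St E -> Act E -> St E -> rmU;
  rm_dR : rmU -> rmU -> St E -> Act E -> St E -> realR;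
  rm_gamma : realR;
  rm_gamma_ge0 : 0 <= rm_gamma;
  rm_gamma_lt1 : rm_gamma < 1 }.
Arguments rm_u0 {E} r.
Arguments rm_dU {E} r _ _ _ _.
Arguments rm_dR {E} r _ _ _ _ _.
Arguments rm_gamma {E} r.

Definition rm_run (E : env) (M : RMspec E) (u : rmU M) (h : seq (transition E)) : rmU M :=
  foldl (fun u (x : transition E) => let: (s, a, s') := x in rm_dU M u s a s') u h.

(* reward of step t, given (at least) the first t+1 transitions *)
Definition rm_step_reward (E : env) (M : RMspec E) (t : nat)
    (h : seq (transition E)) : realR :=
  let ut := rm_run (rm_u0 M) (take t h) in
  match drop t h with
  | (s, a, s') :: _ => rm_dR M ut (rm_dU M ut s a s') s a s'
  | [::] => 0
  end.

(* J(pol) = E[ sum_t gamma^t dR(u_t,u_{t+1})(s_t,a_t,s_{t+1}) ], computed as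
   sum_t gamma^t E[ r_t ] (rewards are bounded, so the two agree). *)
Definition RM_J (E : env) (M : RMspec E) (pol : policy E) : realR :=
  series_sum (fun t => rm_gamma M ^+ t * prefix_expect pol t.+1 (rm_step_reward M t)).

Record ONMRspec (E : env) := ONMRSpec {
  on_R : St E -> Act E -> St E -> realR;
  on_f : realR -> realR;
  on_gamma : realR;
  on_gamma_ge0 : 0 <= on_gamma;
  on_gamma_lt1 : on_gamma < 1 }.
Arguments on_R {E} o _ _ _.
Arguments on_f {E} o _.
Arguments on_gamma {E} o.

Definition on_step_reward (E : env) (O : ONMRspec E) (t : nat)
    (h : seq (transition E)) : realR :=
  match drop t h with
  | (s, a, s') :: _ => on_R O s a s'
  | [::] => 0
  end.

Definition ONMR_J (E : env) (O : ONMRspec E) (pol : policy E) : realR :=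
  on_f O (series_sum (fun t =>
            on_gamma O ^+ t * prefix_expect pol t.+1 (on_step_reward O t))).

Definition induced_order (E : env) (J : policy E -> realR) : policy E -> policy E -> Prop :=
  fun p q => J q <= J p.

Definition same_rel (X : Type) (r1 r2 : X -> X -> Prop) : Prop :=
  forall p q, r1 p q <-> r2 p q.

Definition total_preorder (X : Type) (r : X -> X -> Prop) : Prop :=
  (forall x, r x x) /\ (forall x y z, r x y -> r y z -> r x z) /\
  (forall x y, r x y \/ r y x).

Definition Ord_RM (E : env) (r : policy E -> policy E -> Prop) : Prop :=
  exists M : RMspec E, same_rel r (induced_order (RM_J M)).

Definition Ord_ONMR (E : env) (r : policy E -> policy E -> Prop) : Prop :=
  exists O : ONMRspec E, same_rel r (induced_order (ONMR_J O)).

(* Main.v *)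
Require Import Defs.
From mathcomp Require Import all_boot all_order all_algebra.
From mathcomp Require Import all_classical all_reals all_analysis.
From mathcomp Require Import Rstruct Rstruct_topology.
From mathcomp Require Import ring lra.

Set Implicit Arguments.
Unset Strict Implicit.
Unset Printing Implicit Defensive.
Import Order.TTheory GRing.Theory Num.Theory.
Local Open Scope ring_scope.

Lemma dist1 : is_dist (fun _ : 'I_1 => (1 : realR)).
Proof. by split=> // ; rewrite big_ord1. Qed.

Lemma dist1' (s : 'I_1) (a : 'I_3) : is_dist (fun _ : 'I_1 => (1 : realR)).
Proof. exact: dist1. Qed.

Lemma card1 : (0 < #|'I_1|)%N. Proof. by rewrite card_ord. Qed.
Lemma card3 : (0 < #|'I_3|)%N. Proof. by rewrite card_ord. Qed.

Definition E0 : env := @Env 'I_1 'I_3 (fun _ _ _ => 1) (fun _ => 1) card1 card3 dist1' dist1.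

Lemma sum3 (F : 'I_3 -> realR) : \sum_(i < 3) F i = F ord0 + F (inord 1) + F (inord 2).
Proof.
rewrite !big_ord_recr big_ord0 /= add0r; congr (_ + _ + _); congr F; apply/val_inj => //=;
by rewrite inordK.
Qed.

Lemma pathsum_ext (pol : policy E0) n s h f g :
  (forall l, size l = (size h + n)%N -> f l = g l) -> pathsum pol n s h f = pathsum pol n s h g.
Proof.
elim: n s h => [|n IH] s h H /=.
  by apply: H; rewrite size_rev addn0.
apply: eq_bigr => a _; apply: eq_bigr => s' _; congr (_ * _); apply: IH => l Hl.
by apply: H; rewrite Hl /= addSnnS.
Qed.

Lemma pathsum_const (pol : policy E0) n s h (K : realR) :
  pathsum pol n s h (fun _ => K) = K.
Proof.
elim: n s h => [|n IH] s h //=.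
under eq_bigr do under eq_bigr do rewrite IH.
under eq_bigr do rewrite big_ord1.
rewrite -big_distrl /=.
under eq_bigr do rewrite mulr1.
by have [_ ->] := proj2_sig pol s; rewrite mul1r.
Qed.

Definition o0 : 'I_3 := @Ordinal 3 0 isT.
Definition o1 : 'I_3 := @Ordinal 3 1 isT.
Definition o2 : 'I_3 := @Ordinal 3 2 isT.

Lemma sum3' (F : 'I_3 -> realR) : \sum_(i < 3) F i = F o0 + F o1 + F o2.
Proof.
rewrite !big_ord_recr big_ord0 /= add0r; congr (_ + _ + _); congr F; exact/val_inj.
Qed.

Lemma pathsum_snoc (pol : policy E0) n s h f :
  pathsum pol n.+1 s h f = pathsum pol n s h (fun l =>
    \sum_(a : 'I_3) \sum_(s' : 'I_1) pol_fun pol ord0 a * 1 * f (rcons l (ord0, a, s'))).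
Proof.
elim: n s h => [|n IH] s h.
  rewrite /=; have -> : s = ord0 by apply: ord1.
  apply: eq_bigr => a _; apply: eq_bigr => s' _; by rewrite rev_cons.
rewrite [LHS]/=; rewrite [RHS]/=.
apply: eq_bigr => a _; apply: eq_bigr => s' _; by rewrite -IH.
Qed.

Lemma onmr_term (O : ONMRspec E0) (pol : policy E0) t :
  prefix_expect pol t.+1 (on_step_reward O t) =
  \sum_(a : 'I_3) pol_fun pol ord0 a * on_R O ord0 a ord0.
Proof.
rewrite /prefix_expect big_ord1 mul1r pathsum_snoc.
rewrite (@pathsum_ext _ _ _ _ _ (fun _ => \sum_(a : 'I_3) pol_fun pol ord0 a * on_R O ord0 a ord0)).
  by rewrite pathsum_const.
move=> l /= Hl; apply: eq_bigr => a _; rewrite big_ord1 mulr1.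
rewrite add0n in Hl; by rewrite /on_step_reward -cats1 -Hl drop_size_cat.
Qed.

Definition dU (u : option bool) (s : 'I_1) (a : 'I_3) (s' : 'I_1) : option bool :=
  if u is None then Some (nat_of_ord a == 0%N) else Some false.
Definition dR (u u' : option bool) (s : 'I_1) (a : 'I_3) (s' : 'I_1) : realR :=
  if (u == Some true) && (nat_of_ord a == 1%N) then 1 else 0.

Lemma half_ge0 : 0 <= (1/2 : realR). Proof. lra. Qed.
Lemma half_lt1 : (1/2 : realR) < 1. Proof. lra. Qed.

Definition M0 : RMspec E0 := @RMSpec E0 (option bool : finType) None dU dR (1/2) half_ge0 half_lt1.

Lemma run_false (l : seq (transition E0)) : @rm_run E0 M0 (Some false) l = Some false.
Proof. by elim: l => [|[[s a] s'] l IH] //=. Qed.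

Lemma rm_term0 (pol : policy E0) : prefix_expect pol 1 (rm_step_reward M0 0) = 0.
Proof.
rewrite /prefix_expect big_ord1 mul1r.
rewrite (@pathsum_ext _ _ _ _ _ (fun _ => 0)); first by rewrite pathsum_const.
by move=> [|[[s a] s'] l] _ //=.
Qed.

Lemma rm_termSS (pol : policy E0) k : prefix_expect pol k.+3 (rm_step_reward M0 k.+2) = 0.
Proof.
rewrite /prefix_expect big_ord1 mul1r.
rewrite (@pathsum_ext _ _ _ _ _ (fun _ => 0)); first by rewrite pathsum_const.
move=> [|[[s a] s'] [|[[s2 a2] s2'] l]] //= _.
rewrite /rm_step_reward /= run_false.
by case: (drop k l) => [|[[s3 a3] s3'] l'].
Qed.

Lemma rm_term1 (pol : policy E0) :
  prefix_expect pol 2 (rm_step_reward M0 1) = pol_fun pol ord0 o0 * pol_fun pol ord0 o1.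
Proof.
rewrite /prefix_expect big_ord1 mul1r /=.
rewrite sum3' !big_ord1 !sum3' !big_ord1 /=.
rewrite /rm_step_reward /= /dR /=.
by ring.
Qed.

Lemma RM_J_val (pol : policy E0) :
  RM_J M0 pol = 1/2 * (pol_fun pol ord0 o0 * pol_fun pol ord0 o1).
Proof.
rewrite /RM_J /series_sum; apply: lim_near_cst; first exact: Rhausdorff.
exists 2%N => // n /= Hn.
case: n Hn => [|[|n]] // _.
rewrite big_nat_recl // big_nat_recl // /= rm_term0 rm_term1 expr1 expr0 mul1r add0r.
rewrite big1 ?addr0 // => i _.
by rewrite rm_termSS mulr0.
Qed.

Definition w3 (x y z : realR) (i : 'I_3) : realR :=
  if nat_of_ord i == 0%N then x else if nat_of_ord i == 1%N then y else z.

Lemma w3_dist x y z : 0 <= x -> 0 <= y -> 0 <= z -> x + y + z = 1 ->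
  forall s : 'I_1, is_dist (fun a : 'I_3 => w3 x y z a).
Proof.
move=> hx hy hz hs s; split.
  by move=> [[|[|[|i]]] Hi] //; rewrite /w3.
by rewrite sum3'.
Qed.

Definition mkpol x y z hx hy hz hs : policy E0 :=
  exist _ (fun (s : 'I_1) (a : 'I_3) => w3 x y z a) (@w3_dist x y z hx hy hz hs).

Lemma key (O : ONMRspec E0) (p q : policy E0) :
  same_rel (induced_order (RM_J M0)) (induced_order (ONMR_J O)) ->
  \sum_(a : 'I_3) pol_fun p ord0 a * on_R O ord0 a ord0 =
  \sum_(a : 'I_3) pol_fun q ord0 a * on_R O ord0 a ord0 ->
  pol_fun p ord0 o0 * pol_fun p ord0 o1 = pol_fun q ord0 o0 * pol_fun q ord0 o1.
Proof.
move=> H hK.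
have eJ : ONMR_J O p = ONMR_J O q.
  rewrite /ONMR_J; congr (on_f O _); congr series_sum; apply: funext => t.
  by rewrite !onmr_term hK.
have h1 : induced_order (RM_J M0) p q by apply/H; rewrite /induced_order eJ.
have h2 : induced_order (RM_J M0) q p by apply/H; rewrite /induced_order eJ.
rewrite /induced_order !RM_J_val in h1 h2.
have : 1/2 * (pol_fun p ord0 o0 * pol_fun p ord0 o1) = 1/2 * (pol_fun q ord0 o0 * pol_fun q ord0 o1).
  by apply/le_anti; rewrite h1 h2.
lra.
Qed.

Lemma key3 (O : ONMRspec E0) (x y z : realR) (hx : 0 <= x) (hy : 0 <= y) (hz : 0 <= z)
  (hs : x + y + z = 1) (x' y' z' : realR) (hx' : 0 <= x') (hy' : 0 <= y') (hz' : 0 <= z')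
  (hs' : x' + y' + z' = 1) :
  same_rel (induced_order (RM_J M0)) (induced_order (ONMR_J O)) ->
  x * on_R O ord0 o0 ord0 + y * on_R O ord0 o1 ord0 + z * on_R O ord0 o2 ord0 =
  x' * on_R O ord0 o0 ord0 + y' * on_R O ord0 o1 ord0 + z' * on_R O ord0 o2 ord0 ->
  x * y = x' * y'.
Proof.
move=> H hK.
have := @key O (@mkpol x y z hx hy hz hs) (@mkpol x' y' z' hx' hy' hz' hs') H.
by rewrite !sum3' /=; apply.
Qed.

Theorem mainTheorem20 :
  exists (E : env) (r : policy E -> policy E -> Prop),
    total_preorder r /\ Ord_RM r /\ ~ Ord_ONMR r.
Proof.
exists E0, (induced_order (RM_J M0)); split; last split.
- split; first by move=> x; exact: le_refl.
  split; first by move=> x y z h1 h2; exact: le_trans h2 h1.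
  by move=> x y; rewrite /induced_order; case: (lerP (RM_J M0 y) (RM_J M0 x)) => h; [left|right; apply: ltW].
- by exists M0.
move=> [Om H].
set c0 := on_R Om ord0 o0 ord0; set c1 := on_R Om ord0 o1 ord0; set c2 := on_R Om ord0 o2 ord0.
have h0 : (0 : realR) <= 0 by [].
have h1 : (0 : realR) <= 1 by [].
have hh : (0 : realR) <= 1/2 by lra.
have [eab | nab] := eqVneq (c0 - c2) (c1 - c2).
  have s1 : (1 + 0 + 0 : realR) = 1 by lra.
  have s2 : (1/2 + 1/2 + 0 : realR) = 1 by lra.
  have := @key3 Om _ _ _ h1 h0 h0 s1 _ _ _ hh hh h0 s2 H.
  have -> : 1 * c0 + 0 * c1 + 0 * c2 = 1/2 * c0 + 1/2 * c1 + 0 * c2.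
    have : c0 = c1 by lra.
    move=> ->; lra.
  move=> /(_ erefl); lra.
have nab' : (c0 - c2) - (c1 - c2) != 0 by rewrite subr_eq0.
have hab2 : 0 < ((c0 - c2) - (c1 - c2)) ^+ 2 by rewrite lt_def sqrf_eq0 nab' sqr_ge0.
have [a ea] : exists a, a = c0 - c2 by eexists.
have [b eb] : exists b, b = c1 - c2 by eexists.
rewrite -ea -eb in hab2.
have Dpos : 0 < a ^+ 2 + b ^+ 2.
  have := sqr_ge0 (a + b).
  have e1 : (a - b) ^+ 2 = a ^+ 2 + b ^+ 2 - 2 * a * b by ring.
  have e2 : (a + b) ^+ 2 = a ^+ 2 + b ^+ 2 + 2 * a * b by ring.
  lra.
have [D eD] : exists D, D = a ^+ 2 + b ^+ 2 by eexists.
rewrite -eD in Dpos.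
have hD : (a - b) ^+ 2 <= 2 * D.
  have := sqr_ge0 (a + b).
  have e1 : (a - b) ^+ 2 = a ^+ 2 + b ^+ 2 - 2 * a * b by ring.
  have e2 : (a + b) ^+ 2 = a ^+ 2 + b ^+ 2 + 2 * a * b by ring.
  lra.
pose t := (a - b) / (8 * D).
have ht : t * (8 * D) = a - b by rewrite /t mulfVK // mulf_neq0 // ?gt_eqF.
have q2pos : 0 < t * (a - b).
  have : t * (a - b) * (8 * D) = (a - b) ^+ 2 by rewrite -ht; ring.
  nra.
have q2le : t * (a - b) <= 1/4.
  have : t * (a - b) * (8 * D) = (a - b) ^+ 2 by rewrite -ht; ring.
  nra.
have ub : (t * b) ^+ 2 <= 1/32.
  have e : (t * b * (8 * D)) ^+ 2 <= 2 * D ^+ 2.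
    have -> : t * b * (8 * D) = (a - b) * b by rewrite -ht; ring.
    nra.
  have D2 : 0 < D ^+ 2 by nra.
  nra.
have ua : (t * a) ^+ 2 <= 1/32.
  have e : (t * a * (8 * D)) ^+ 2 <= 2 * D ^+ 2.
    have -> : t * a * (8 * D) = (a - b) * a by rewrite -ht; ring.
    nra.
  have D2 : 0 < D ^+ 2 by nra.
  nra.
have hq0 : 0 <= 1/2 + t * b by nra.
have hq1 : 0 <= 1/2 - t * a by nra.
have hq2 : 0 <= t * (a - b) by apply: ltW.
have s1 : (1/2 + 1/2 + 0 : realR) = 1 by lra.
have s2 : (1/2 + t * b) + (1/2 - t * a) + t * (a - b) = 1.
  have -> : (1/2 + t * b) + (1/2 - t * a) + t * (a - b) = 1/2 + 1/2 by ring.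
  lra.
have := @key3 Om _ _ _ hh hh h0 s1 _ _ _ hq0 hq1 hq2 s2 H.
have -> : 1/2 * c0 + 1/2 * c1 + 0 * c2 =
  (1/2 + t * b) * c0 + (1/2 - t * a) * c1 + t * (a - b) * c2.
  rewrite ea eb; ring.
move=> /(_ erefl) E.
nra.
Qed.
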